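(* Let $\mathcal{E}$ be an ellipse in a real affine plane. Consider two Euclidean structures (positive definite quadratic forms on the plane's vector space) on this plane; each makes the plane Euclidean and thus defines a pair of foci of $\mathcal{E}$ and a major axis of $\mathcal{E}$. Let $\ell$ be a chord of $\mathcal{E}$ passing through two foci, one of each pair. Then the two major axes (each measured with its own Euclidean structure) have equal length if and only if the two Euclidean structures induce equal units of length on the chord $\ell$ (i.e. assign the same length to $\ell$). *)

(* Defs.v *)
(* real affine plane modelled as 'rV[R]_2 over R : realType. *)
From HB Require Import structures.
From mathcomp Require Import all_boot all_order all_algebra.
From mathcomp Require Import reals.
Set Implicit Arguments. Unset Strict Implicit. Unset Printing Implicit Defensive.
Import Order.TTheory GRing.Theory Num.Theory.
Local Open Scope ring_scope.

Definition qform {R : realType} (S : 'M[R]_2) (v : 'rV[R]_2) : R :=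
  (v *m S *m v^T) 0 0.

Definition pos_def {R : realType} (S : 'M[R]_2) : Prop :=
  S^T = S /\ forall v : 'rV[R]_2, v != 0 -> 0 < qform S v.

Definition slen {R : realType} (S : 'M[R]_2) (v : 'rV[R]_2) : R :=
  Num.sqrt (qform S v).

Definition is_ellipse {R : realType} (E : 'rV[R]_2 -> Prop) : Prop :=
  exists (Q : 'M[R]_2) (c : 'rV[R]_2),
    pos_def Q /\ forall x, E x <-> qform Q (x - c) = 1.

Definition foci_axis {R : realType} (S : 'M[R]_2) (E : 'rV[R]_2 -> Prop)
  (F1 F2 : 'rV[R]_2) (a : R) : Prop :=
  0 < a /\ forall x, E x <-> slen S (x - F1) + slen S (x - F2) = 2 * a.

Definition major_axis (R : realType) (a : R) : R := 2 * a.

Definition on_segment {R : realType} (P Q F : 'rV[R]_2) : Prop :=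
  exists t : R, 0 <= t <= 1 /\ F = P + t *: (Q - P).

(* Main.v *)
Require Import Defs.
From HB Require Import structures.
From mathcomp Require Import all_boot all_order all_algebra.
From mathcomp Require Import reals.
From mathcomp Require Import ring lra.
Import Order.TTheory GRing.Theory Num.Theory.
Local Open Scope ring_scope.

Definition qf {R : realType} (a b c x y : R) := a * x ^+ 2 + 2 * b * x * y + c * y ^+ 2.

Lemma qf_pos {R : realType} (a b c x y : R) : 0 < a -> 0 < a * c - b ^+ 2 ->
  (x != 0) || (y != 0) -> 0 < qf a b c x y.
Proof.
move=> ha hd hxy.
have e : a * qf a b c x y = (a * x + b * y) ^+ 2 + (a * c - b ^+ 2) * y ^+ 2.
  by rewrite /qf; ring.
have : 0 < a * qf a b c x y.
  rewrite e.
  case: (eqVneq y 0) => [y0|yn0].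
    move: hxy; rewrite y0 eqxx orbF => xn0.
    have -> : (a * x + b * 0) ^+ 2 + (a * c - b ^+ 2) * 0 ^+ 2 = (a * x) ^+ 2 by ring.
    by rewrite exprn_even_gt0 // mulf_neq0 // gt_eqF.
  apply: ltr_pwDr; last by rewrite sqr_ge0.
  by apply: mulr_gt0 => //; rewrite exprn_even_gt0 //.
by rewrite pmulr_rgt0.
Qed.

Lemma qf_ge0 {R : realType} (a b c x y : R) : 0 < a -> 0 < a * c - b ^+ 2 ->
  0 <= qf a b c x y.
Proof.
move=> ha hd.
case: (boolP ((x != 0) || (y != 0))) => h; first by apply/ltW/qf_pos.
move: h; rewrite negb_or !negbK => /andP[/eqP -> /eqP ->].
by rewrite /qf; lra.
Qed.

Lemma qf_div {R : realType} (a b c x y u : R) : u != 0 ->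
  qf a b c (x / u) (y / u) = qf a b c x y / u ^+ 2.
Proof. by move=> hu; rewrite /qf; field. Qed.

Lemma unit_pt {R : realType} (m00 m01 m11 w0 w1 : R) :
  0 < m00 -> 0 < m00 * m11 - m01 ^+ 2 -> (w0 != 0) || (w1 != 0) ->
  let mu := Num.sqrt (qf m00 m01 m11 w0 w1) in
  0 < mu /\ mu ^+ 2 = qf m00 m01 m11 w0 w1 /\ qf m00 m01 m11 (w0 / mu) (w1 / mu) = 1.
Proof.
move=> h1 h2 hw mu.
have qp : 0 < qf m00 m01 m11 w0 w1 by apply: qf_pos.
have mu0 : 0 < mu by rewrite sqrtr_gt0.
have mu2 : mu ^+ 2 = qf m00 m01 m11 w0 w1 by rewrite sqr_sqrtr // ltW.
split => //; split => //.
by rewrite qf_div ?gt_eqF // mu2 divff // gt_eqF.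
Qed.

Arguments unit_pt {R m00 m01 m11 w0 w1}.

Lemma ident {R : realType} (k00 k01 k11 m00 m01 m11 e0 e1 beta : R) :
  0 < m00 -> 0 < m00 * m11 - m01 ^+ 2 ->
  (forall y0 y1, qf m00 m01 m11 y0 y1 = 1 ->
     qf k00 k01 k11 (e0 + y0) (e1 + y1) = beta /\
     qf k00 k01 k11 (e0 - y0) (e1 - y1) = beta) ->
  forall w0 w1, qf k00 k01 k11 w0 w1 = beta * qf m00 m01 m11 w0 w1.
Proof.
move=> h1 h2 H.
have Ke : qf k00 k01 k11 e0 e1 = 0.
  case: (boolP ((e0 != 0) || (e1 != 0))) => he; last first.
    by move: he; rewrite negb_or !negbK => /andP[/eqP -> /eqP ->]; rewrite /qf; ring.
  have [mu0 [mu2 mu1]] := unit_pt h1 h2 he.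
  set mu := Num.sqrt _ in mu0 mu2 mu1.
  have [H1 H2] := H _ _ mu1.
  have : qf k00 k01 k11 (e0 + e0 / mu) (e1 + e1 / mu)
       - qf k00 k01 k11 (e0 - e0 / mu) (e1 - e1 / mu) = 4 / mu * qf k00 k01 k11 e0 e1.
    by rewrite /qf; field; rewrite gt_eqF.
  rewrite H1 H2 subrr => /esym/eqP; rewrite mulf_eq0 => /orP[|/eqP //].
  have h4 : 4 / mu != 0 by rewrite mulf_neq0 ?invr_eq0 ?gt_eqF // ; lra.
  by rewrite (negbTE h4).
move=> w0 w1.
case: (boolP ((w0 != 0) || (w1 != 0))) => hw; last first.
  by move: hw; rewrite negb_or !negbK => /andP[/eqP -> /eqP ->]; rewrite /qf; ring.
have [mu0 [mu2 mu1]] := unit_pt h1 h2 hw.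
set mu := Num.sqrt _ in mu0 mu2 mu1.
have [H1 H2] := H _ _ mu1.
have : qf k00 k01 k11 (e0 + w0 / mu) (e1 + w1 / mu)
     + qf k00 k01 k11 (e0 - w0 / mu) (e1 - w1 / mu)
     = 2 * qf k00 k01 k11 e0 e1 + 2 * (qf k00 k01 k11 w0 w1 / mu ^+ 2).
  by rewrite /qf; field; rewrite gt_eqF.
rewrite H1 H2 Ke mulr0 add0r -mu2 => e.
have mun : mu != 0 by rewrite gt_eqF.
have -> : qf k00 k01 k11 w0 w1 = (2 * (qf k00 k01 k11 w0 w1 / mu ^+ 2)) * mu ^+ 2 / 2.
  by field.
by rewrite -e; field.
Qed.

Lemma key {R : realType} (m00 m01 m11 c0 c1 s00 s01 s11 f0 f1 g0 g1 a p0 p1 q0 q1 t : R) :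
  0 < m00 -> 0 < m00 * m11 - m01 ^+ 2 -> 0 < s00 -> 0 < s00 * s11 - s01 ^+ 2 -> 0 < a ->
  (forall x0 x1, qf m00 m01 m11 (x0 - c0) (x1 - c1) = 1 ->
    Num.sqrt (qf s00 s01 s11 (x0 - f0) (x1 - f1)) +
    Num.sqrt (qf s00 s01 s11 (x0 - g0) (x1 - g1)) = 2 * a) ->
  qf m00 m01 m11 (p0 - c0) (p1 - c1) = 1 -> qf m00 m01 m11 (q0 - c0) (q1 - c1) = 1 ->
  (q0 - p0 != 0) || (q1 - p1 != 0) -> 0 <= t <= 1 ->
  f0 = p0 + t * (q0 - p0) -> f1 = p1 + t * (q1 - p1) ->
  2 * Num.sqrt (qf s00 s01 s11 (q0 - p0) (q1 - p1)) = a * qf m00 m01 m11 (q0 - p0) (q1 - p1).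
Proof.
move=> hm1 hm2 hs1 hs2 ha hE hP hQ hpq /andP[t0 t1] ef0 ef1.
subst f0 f1.
have an : a != 0 by rewrite gt_eqF.
pose d0 := (p0 + t * (q0 - p0) - g0) / 2.
pose d1 := (p1 + t * (q1 - p1) - g1) / 2.
pose m0 := (p0 + t * (q0 - p0) + g0) / 2.
pose m1 := (p1 + t * (q1 - p1) + g1) / 2.
pose p := s00 * d0 + s01 * d1.
pose qq := s01 * d0 + s11 * d1.
pose k00 := s00 - p ^+ 2 / a ^+ 2.
pose k01 := s01 - p * qq / a ^+ 2.
pose k11 := s11 - qq ^+ 2 / a ^+ 2.
pose beta := a ^+ 2 - qf s00 s01 s11 d0 d1.
have A : forall x0 x1,
    Num.sqrt (qf s00 s01 s11 (x0 - (p0 + t * (q0 - p0))) (x1 - (p1 + t * (q1 - p1)))) +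
    Num.sqrt (qf s00 s01 s11 (x0 - g0) (x1 - g1)) = 2 * a ->
    Num.sqrt (qf s00 s01 s11 (x0 - (p0 + t * (q0 - p0))) (x1 - (p1 + t * (q1 - p1))))
      = a - (p * (x0 - m0) + qq * (x1 - m1)) / a /\
    qf k00 k01 k11 (x0 - m0) (x1 - m1) = beta.
  move=> x0 x1 h.
  set r := Num.sqrt _ in h *.
  set r' := Num.sqrt _ in h.
  have r2 : r ^+ 2 = qf s00 s01 s11 (x0 - (p0 + t * (q0 - p0))) (x1 - (p1 + t * (q1 - p1))).
    by rewrite sqr_sqrtr // qf_ge0.
  have r'2 : r' ^+ 2 = qf s00 s01 s11 (x0 - g0) (x1 - g1).
    by rewrite sqr_sqrtr // qf_ge0.
  have er' : r' = 2 * a - r by lra.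
  have hr : r = a - (p * (x0 - m0) + qq * (x1 - m1)) / a.
    have e : 4 * a * r = 4 * a ^+ 2 + r ^+ 2 - r' ^+ 2 by rewrite er'; ring.
    rewrite r2 r'2 in e.
    have a4 : 4 * a != 0 by rewrite mulf_neq0 // ; lra.
    apply: (mulfI a4); rewrite e /p /qq /d0 /d1 /m0 /m1 /qf; by field.
  split => //.
  rewrite hr in r2.
  have e : qf k00 k01 k11 (x0 - m0) (x1 - m1) - beta =
     qf s00 s01 s11 (x0 - (p0 + t * (q0 - p0))) (x1 - (p1 + t * (q1 - p1)))
     - (a - (p * (x0 - m0) + qq * (x1 - m1)) / a) ^+ 2.
    by rewrite /k00 /k01 /k11 /beta /p /qq /d0 /d1 /m0 /m1 /qf; by field.
  by apply/eqP; rewrite -subr_eq0 e r2 subrr.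
pose e0 := c0 - m0.
pose e1 := c1 - m1.
have B : forall y0 y1, qf m00 m01 m11 y0 y1 = 1 ->
     qf k00 k01 k11 (e0 + y0) (e1 + y1) = beta /\
     qf k00 k01 k11 (e0 - y0) (e1 - y1) = beta.
  move=> y0 y1 hy.
  have hp : qf m00 m01 m11 (c0 + y0 - c0) (c1 + y1 - c1) = 1.
    by rewrite -hy /qf; ring.
  have hm : qf m00 m01 m11 (c0 - y0 - c0) (c1 - y1 - c1) = 1.
    by rewrite -hy /qf; ring.
  have [_ k1] := A _ _ (hE _ _ hp).
  have [_ k2] := A _ _ (hE _ _ hm).
  split.
    by rewrite -k1 /e0 /e1; congr qf; ring.
  by rewrite -k2 /e0 /e1; congr qf; ring.
have Kv := @ident _ k00 k01 k11 _ _ _ e0 e1 beta hm1 hm2 B.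
have bne : beta != 0.
  apply/eqP => b0.
  have K10 := Kv 1 0; have K01 := Kv 0 1; have K11 := Kv 1 1.
  rewrite b0 !mul0r in K10 K01 K11.
  have e1' : k00 = 0 by rewrite -K10 /qf; ring.
  have e2' : k11 = 0 by rewrite -K01 /qf; ring.
  have e3' : k01 = 0.
    have : qf k00 k01 k11 1 1 = k00 + 2 * k01 + k11 by rewrite /qf; ring.
    rewrite K11 e1' e2' => /esym/eqP; rewrite addr0 add0r mulf_eq0 => /orP[|/eqP //].
    by move=> h; exfalso; move: h; apply/negP; lra.
  have : s00 * s11 - s01 ^+ 2 = (k00 + p ^+ 2 / a ^+ 2) * (k11 + qq ^+ 2 / a ^+ 2)
      - (k01 + p * qq / a ^+ 2) ^+ 2 by rewrite /k00 /k01 /k11; ring.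
  rewrite e1' e2' e3' !add0r.
  have -> : (p ^+ 2 / a ^+ 2) * (qq ^+ 2 / a ^+ 2) - (p * qq / a ^+ 2) ^+ 2 = 0 by field.
  lra.
set v0 := q0 - p0.
set v1 := q1 - p1.
set lam := Num.sqrt (qf s00 s01 s11 v0 v1).
have lam0 : 0 <= lam by apply: sqrtr_ge0.
have [sP kP] := A _ _ (hE _ _ hP).
have [sQ kQ] := A _ _ (hE _ _ hQ).
have eP : Num.sqrt (qf s00 s01 s11 (p0 - (p0 + t * v0)) (p1 - (p1 + t * v1))) = t * lam.
  have -> : qf s00 s01 s11 (p0 - (p0 + t * v0)) (p1 - (p1 + t * v1))
     = t ^+ 2 * qf s00 s01 s11 v0 v1 by rewrite /qf; ring.
  by rewrite sqrtrM ?sqr_ge0 // sqrtr_sqr ger0_norm.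
have eQ : Num.sqrt (qf s00 s01 s11 (q0 - (p0 + t * v0)) (q1 - (p1 + t * v1))) = (1 - t) * lam.
  have -> : qf s00 s01 s11 (q0 - (p0 + t * v0)) (q1 - (p1 + t * v1))
     = (1 - t) ^+ 2 * qf s00 s01 s11 v0 v1 by rewrite /qf /v0 /v1; ring.
  by rewrite sqrtrM ?sqr_ge0 // sqrtr_sqr ger0_norm // subr_ge0.
rewrite eP in sP; rewrite eQ in sQ.
have eq1 : beta = 2 * a * (t * (1 - t)) * lam.
  have h : a - (p * (p0 + t * v0 - m0) + qq * (p1 + t * v1 - m1)) / a
     = (1 - t) * (a - (p * (p0 - m0) + qq * (p1 - m1)) / a)
       + t * (a - (p * (q0 - m0) + qq * (q1 - m1)) / a) by rewrite /v0 /v1; by field.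
  rewrite -sP -sQ in h.
  have h2 : a - (p * (p0 + t * v0 - m0) + qq * (p1 + t * v1 - m1)) / a = beta / a.
    by rewrite /beta /p /qq /d0 /d1 /m0 /m1 /v0 /v1 /qf; by field.
  rewrite h2 in h.
  have -> : beta = a * (beta / a) by field.
  by rewrite h; ring.
have eq2 : beta ^+ 2 = a ^+ 2 * (t * (1 - t)) * beta * qf m00 m01 m11 v0 v1.
  have h : qf k00 k01 k11 (p0 + t * v0 - m0) (p1 + t * v1 - m1)
     = (1 - t) * qf k00 k01 k11 (p0 - m0) (p1 - m1) + t * qf k00 k01 k11 (q0 - m0) (q1 - m1)
       - t * (1 - t) * qf k00 k01 k11 v0 v1 by rewrite /qf /v0 /v1; ring.
  rewrite kP kQ (Kv v0 v1) in h.
  have h2 : qf k00 k01 k11 (p0 + t * v0 - m0) (p1 + t * v1 - m1)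
     = (a ^+ 2 - beta) - (a ^+ 2 - beta) ^+ 2 / a ^+ 2.
    by rewrite /k00 /k01 /k11 /beta /p /qq /d0 /d1 /m0 /m1 /v0 /v1 /qf; by field.
  rewrite h2 in h.
  have -> : beta ^+ 2 = a ^+ 2 * (beta - ((a ^+ 2 - beta) - (a ^+ 2 - beta) ^+ 2 / a ^+ 2)) by field.
  by rewrite h; ring.
have X0 : t * (1 - t) != 0.
  apply/eqP => X0; move/eqP: bne; apply; by rewrite eq1 X0 mulr0 mul0r.
have : a * (t * (1 - t)) * beta * (2 * lam - a * qf m00 m01 m11 v0 v1) = 0.
  have -> : a * (t * (1 - t)) * beta * (2 * lam - a * qf m00 m01 m11 v0 v1)
     = beta * (2 * a * (t * (1 - t)) * lam) - a ^+ 2 * (t * (1 - t)) * beta * qf m00 m01 m11 v0 v1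
     by ring.
  by rewrite -eq1 -eq2; ring.
have nz : a * (t * (1 - t)) * beta != 0 := mulf_neq0 (mulf_neq0 an X0) bne.
move/eqP; rewrite mulf_eq0 (negbTE nz) /= subr_eq0 => /eqP.
done.
Qed.

Lemma qformE (R : realType) (S : 'M[R]_2) (v : 'rV[R]_2) :
  qform S v = S 0 0 * v 0 0 ^+ 2 + (S 0 1 + S 1 0) * v 0 0 * v 0 1 + S 1 1 * v 0 1 ^+ 2.
Proof.
rewrite /qform !mxE !big_ord_recl !big_ord0 /=.
rewrite !(mxE, big_ord_recl, big_ord0) /=.
have -> : lift ord0 ord0 = 1 :> 'I_2 by apply/val_inj.
have -> : ord0 = 0 :> 'I_2 by apply/val_inj.
ring.
Qed.

Definition mkv {R : realType} (x y : R) : 'rV[R]_2 :=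
  \row_(j < 2) (if j == 0 then x else y).

Lemma mkv0 {R : realType} (x y : R) : mkv x y 0 0 = x.
Proof. by rewrite /mkv mxE. Qed.

Lemma mkv1 {R : realType} (x y : R) : mkv x y 0 1 = y.
Proof. by rewrite /mkv mxE. Qed.

Lemma vec_neq0 {R : realType} (v : 'rV[R]_2) : (v 0 0 != 0) || (v 0 1 != 0) -> v != 0.
Proof.
move=> h; apply/eqP => v0; move: h; by rewrite v0 !mxE eqxx.
Qed.

Lemma pd_coeffs {R : realType} (S : 'M[R]_2) : pos_def S ->
  [/\ 0 < S 0 0, 0 < S 0 0 * S 1 1 - S 0 1 ^+ 2 &
   forall v, qform S v = qf (S 0 0) (S 0 1) (S 1 1) (v 0 0) (v 0 1)].
Proof.
move=> [ST Sp].
have S10 : S 1 0 = S 0 1 by rewrite -{1}ST mxE.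
have qE : forall v, qform S v = qf (S 0 0) (S 0 1) (S 1 1) (v 0 0) (v 0 1).
  by move=> v; rewrite qformE S10 /qf; ring.
have h00 : 0 < S 0 0.
  have := Sp (mkv 1 0); rewrite qE mkv0 mkv1 /qf.
  have -> : S 0 0 * 1 ^+ 2 + 2 * S 0 1 * 1 * 0 + S 1 1 * 0 ^+ 2 = S 0 0 by ring.
  by apply; apply: vec_neq0; rewrite mkv0 oner_neq0.
split => //.
have := Sp (mkv (S 0 1) (- S 0 0)); rewrite qE mkv0 mkv1 /qf.
have -> : S 0 0 * S 0 1 ^+ 2 + 2 * S 0 1 * S 0 1 * - S 0 0 + S 1 1 * (- S 0 0) ^+ 2
   = S 0 0 * (S 0 0 * S 1 1 - S 0 1 ^+ 2) by ring.
move=> h.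
have nz : mkv (S 0 1) (- S 0 0) != 0 by apply: vec_neq0; rewrite mkv0 mkv1 oppr_eq0 (gt_eqF h00) orbT.
by have := h nz; rewrite pmulr_rgt0.
Qed.

Lemma key_vec {R : realType} (E : 'rV[R]_2 -> Prop) (M S : 'M[R]_2) (c F F' P Q : 'rV[R]_2) (a : R) :
  pos_def M -> (forall x, E x <-> qform M (x - c) = 1) -> pos_def S ->
  foci_axis S E F F' a -> E P -> E Q -> P != Q -> on_segment P Q F ->
  2 * slen S (Q - P) = a * qform M (Q - P).
Proof.
move=> /pd_coeffs[hm1 hm2 qM] hEM /pd_coeffs[hs1 hs2 qS] [ha hF] EP EQ PQ [t [ht eF]].
rewrite /slen qS qM !mxE.
apply: (@key _ _ _ _ (c 0 0) (c 0 1) _ _ _ (F 0 0) (F 0 1) (F' 0 0) (F' 0 1) a (P 0 0) (P 0 1) (Q 0 0) (Q 0 1) t) => //.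
- move=> x0 x1 hx.
  have Ex : E (mkv x0 x1) by apply/hEM; rewrite qM !mxE /=.
  have := (hF _).1 Ex; rewrite /slen !qS !mxE /= //.
- by have := (hEM P).1 EP; rewrite qM !mxE.
- by have := (hEM Q).1 EQ; rewrite qM !mxE.
- apply: contraNT PQ; rewrite negb_or !negbK => /andP[h0 h1].
  apply/eqP/matrixP => i j; rewrite (ord1 i).
  case: j => [[|[|//]] Hj].
    have -> : Ordinal Hj = 0 by apply/val_inj.
    by apply/eqP; rewrite eq_sym -subr_eq0.
  have -> : Ordinal Hj = 1 by apply/val_inj.
  by apply/eqP; rewrite eq_sym -subr_eq0.
- by rewrite eF !mxE.
- by rewrite eF !mxE.
Qed.

Theorem proposition8 (R : realType) (E : 'rV[R]_2 -> Prop)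
  (S1 S2 : 'M[R]_2) (F1 F1' F2 F2' : 'rV[R]_2) (a1 a2 : R)
  (P Q : 'rV[R]_2) :
  is_ellipse E ->
  pos_def S1 -> pos_def S2 ->
  foci_axis S1 E F1 F1' a1 ->
  foci_axis S2 E F2 F2' a2 ->
  E P -> E Q -> P != Q ->
  on_segment P Q F1 -> on_segment P Q F2 ->
  (major_axis a1 = major_axis a2 <-> slen S1 (Q - P) = slen S2 (Q - P)).
Proof.
move=> [M [c [pM hEM]]] pS1 pS2 f1 f2 EP EQ PQ o1 o2.
have k1 := @key_vec _ E M S1 c F1 F1' P Q a1 pM hEM pS1 f1 EP EQ PQ o1.
have k2 := @key_vec _ E M S2 c F2 F2' P Q a2 pM hEM pS2 f2 EP EQ PQ o2.
have mpos : 0 < qform M (Q - P).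
  by case: pM => _ /(_ (Q - P)); apply; rewrite subr_eq0 eq_sym.
rewrite /major_axis; split => h.
  have a12 : a1 = a2 by lra.
  have : 2 * slen S1 (Q - P) = 2 * slen S2 (Q - P) by rewrite k1 k2 a12.
  lra.
have : a1 * qform M (Q - P) = a2 * qform M (Q - P) by rewrite -k1 -k2 h.
move/mulIf => -> //; by rewrite gt_eqF.
Qed.
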